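(* Let $G$, $P$, $w$ be as in the context, and assume all edge costs $w_{ij}$ are positive integer multiples of a number $\delta>0$. Let $s\neq t$ with at least one directed path from $s$ to $t$. For $\alpha\in(0,1)$ write $U_s^{\{t,\overline{o}\}}(\alpha)=L_{st}+\epsilon_{st}(\alpha)$. Then $\epsilon_{st}(\alpha)=\delta\sum_{j\ge1}\alpha^{j\delta}\gamma_j$ with all $\gamma_j\ge 0$, where, letting $l_1=L_{st}<l_2<\dots$ with $l_{i+1}=l_i+\delta$ enumerate the possible walk costs from $s$ to $t$ and $\mathrm{Pr}_{l_i}$ be the probability (under $P$, with $t$ absorbing) that the walk from $s$ reaches $t$ with total cost exactly $l_i$, $\gamma_j=\dfrac{\sum_{i\ge1}\alpha^{l_i}\mathrm{Pr}_{l_{i+j}}}{\sum_{i\ge1}\alpha^{l_i}\mathrm{Pr}_{l_i}}$. In particular $U_s^{\{t,\overline{o}\}}(\alpha)\ge L_{st}$ for all $\alpha\in(0,1)$.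
   Context: $G=(V,E)$ is a finite directed graph; each edge $e_{ij}\in E$ has a positive cost $w_{ij}$. $P$ is a row-stochastic transition matrix with $P_{ij}>0$ iff $e_{ij}\in E$. $L_{st}$ is the minimum total cost of a directed path from $s$ to $t$. Evaporating network $G_\alpha$: Markov chain on $V\cup\{o\}$ with $P_{ij}(\alpha)=P_{ij}\alpha^{w_{ij}}$ ($i,j\in V$), $P_{io}(\alpha)=1-\sum_jP_{ij}\alpha^{w_{ij}}$, $o$ absorbing. With $t$ and $o$ absorbing and $\mathcal T=V\setminus\{t\}$, let $Q_x$ be the probability that the chain from $x$ is absorbed at $t$, $F(\alpha)=(I-P(\alpha)_{\mathcal T\mathcal T})^{-1}$, $F^{\{t,\overline o\}}_{sm}(\alpha)=F_{sm}(\alpha)Q_m/Q_s$, and avoidance hitting cost $U_s^{\{t,\overline{o}\}}(\alpha)=\sum_{m\in\mathcal T}F^{\{t,\overline o\}}_{sm}(\alpha)\,r_m$, $r_m=\sum_{i}P_{mi}(\alpha)w_{mi}Q_i/Q_m$; it equals the expected total cost of the walk from $s$ conditioned on absorption at $t$. *)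

(* Defs.v *)
From Stdlib Require Import Reals Lra Lia Arith List ClassicalEpsilon.
Open Scope R_scope.

(* Vertices are the naturals 0 .. n-1; matrices are functions nat -> nat -> R. *)

Fixpoint rsum (n : nat) (f : nat -> R) : R :=
  match n with O => 0 | S k => rsum k f + f k end.

(* sum over the transient set T = V \ {t} *)
Definition rsumT (n t : nat) (f : nat -> R) : R :=
  rsum n (fun m => if Nat.eqb m t then 0 else f m).

(* Value of a series (classically chosen limit; 0 if divergent). *)
Definition ssum (u : nat -> R) : R :=
  match excluded_middle_informative (exists l, infinite_sum u l) with
  | left H => proj1_sig (constructive_indefinite_description _ H)
  | right _ => 0
  end.

(* Directed walk x = x0 -> x1 -> ... -> xk = y, p = [x1; ...; xk],
   each step an edge of G, i.e. P x_i x_{i+1} > 0. *)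
Fixpoint walk_ok (n : nat) (P : nat -> nat -> R) (x : nat) (p : list nat) (y : nat) : Prop :=
  match p with
  | nil => x = y
  | z :: p' => (z < n)%nat /\ 0 < P x z /\ walk_ok n P z p' y
  end.

Fixpoint walk_cost (w : nat -> nat -> R) (x : nat) (p : list nat) : R :=
  match p with
  | nil => 0
  | z :: p' => w x z + walk_cost w z p'
  end.

Definition is_min_cost (n : nat) (P w : nat -> nat -> R) (s t : nat) (L : R) : Prop :=
  (exists p, walk_ok n P s p t /\ walk_cost w s p = L) /\
  (forall p, walk_ok n P s p t -> L <= walk_cost w s p).

Definition Pev (P w : nat -> nat -> R) (alpha : R) (i j : nat) : R :=
  P i j * Rpower alpha (w i j).

(* F = (I - P(alpha)_TT)^{-1}: F is the inverse on the index set T. *)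
Definition is_fundamental (n t : nat) (Pa : nat -> nat -> R) (F : nat -> nat -> R) : Prop :=
  forall i k, (i < n)%nat -> (k < n)%nat -> i <> t -> k <> t ->
    rsumT n t (fun m => ((if Nat.eqb i m then 1 else 0) - Pa i m) * F m k)
      = (if Nat.eqb i k then 1 else 0).

(* Absorption probability at t (t and o absorbing): Q_x = sum_{m in T} F_xm P_mt(alpha), Q_t = 1. *)
Definition Qabs (n t : nat) (Pa F : nat -> nat -> R) (x : nat) : R :=
  if Nat.eqb x t then 1 else rsumT n t (fun m => F x m * Pa m t).

(* r_m = sum_i P_mi(alpha) w_mi Q_i / Q_m  (the sink o contributes Q_o = 0). *)
Definition rcost (n t : nat) (Pa w F : nat -> nat -> R) (m : nat) : R :=
  rsum n (fun i => Pa m i * w m i * Qabs n t Pa F i / Qabs n t Pa F m).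

Definition Uavoid (n t : nat) (Pa w F : nat -> nat -> R) (s : nat) : R :=
  rsumT n t (fun m => F s m * Qabs n t Pa F m / Qabs n t Pa F s * rcost n t Pa w F m).

(* hitw m c x: probability (under P, t absorbing) that the walk from x
   reaches t for the first time after exactly m steps with total cost exactly c. *)
Fixpoint hitw (n : nat) (P w : nat -> nat -> R) (t : nat) (m : nat) (c : R) (x : nat) : R :=
  match m with
  | O => if Nat.eqb x t then (if Req_EM_T c 0 then 1 else 0) else 0
  | S m' => if Nat.eqb x t then 0
            else rsum n (fun j => P x j * hitw n P w t m' (c - w x j) j)
  end.

Definition PrCost (n : nat) (P w : nat -> nat -> R) (s t : nat) (l : R) : R :=
  ssum (fun m => hitw n P w t m l s).

(* Main.v *)
Require Import Defs.
From Stdlib Require Import Reals List.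
Open Scope R_scope.
From Stdlib Require Import Lra Lia Arith ClassicalEpsilon.
From Coquelicot Require Import Coquelicot.
Open Scope R_scope.


Lemma rsum_ext n f g : (forall j, (j < n)%nat -> f j = g j) -> rsum n f = rsum n g.
Proof. induction n; simpl; intros H; auto. rewrite IHn; [rewrite H|]; auto; intros; apply H; lia. Qed.

Lemma rsum_plus n f g : rsum n (fun j => f j + g j) = rsum n f + rsum n g.
Proof. induction n; simpl; [lra|]. rewrite IHn; lra. Qed.

Lemma rsum_scal n c f : rsum n (fun j => c * f j) = c * rsum n f.
Proof. induction n; simpl; [lra|]. rewrite IHn; lra. Qed.

Lemma rsum_scal_r n c f : rsum n (fun j => f j * c) = rsum n f * c.
Proof. induction n; simpl; [lra|]. rewrite IHn; lra. Qed.

Lemma rsum_zero n : rsum n (fun _ => 0) = 0.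
Proof. induction n; simpl; [lra|]. rewrite IHn; lra. Qed.

Lemma rsum_nonneg n f : (forall j, (j < n)%nat -> 0 <= f j) -> 0 <= rsum n f.
Proof. induction n; simpl; intros H; [lra|]. assert (0 <= f n) by (apply H; lia).
assert (0 <= rsum n f) by (apply IHn; intros; apply H; lia). lra. Qed.

Lemma rsum_le n f g : (forall j, (j < n)%nat -> f j <= g j) -> rsum n f <= rsum n g.
Proof. induction n; simpl; intros H; [lra|]. assert (f n <= g n) by (apply H; lia).
assert (rsum n f <= rsum n g) by (apply IHn; intros; apply H; lia). lra. Qed.

Lemma rsum_ge_term n f j : (forall j, (j < n)%nat -> 0 <= f j) -> (j < n)%nat -> f j <= rsum n f.
Proof. induction n; simpl; intros H Hj; [lia|].
destruct (Nat.eq_dec j n) as [->|Hne].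
- assert (0 <= rsum n f) by (apply rsum_nonneg; intros; apply H; lia). lra.
- assert (f j <= rsum n f) by (apply IHn; [intros; apply H|]; lia).
  assert (0 <= f n) by (apply H; lia). lra. Qed.

Lemma rsum_neq0 n f : rsum n f <> 0 -> exists j, (j < n)%nat /\ f j <> 0.
Proof. induction n; simpl; intros H; [lra|].
destruct (Req_dec (f n) 0) as [E|E].
- destruct IHn as [j [Hj Hf]]; [lra|]. exists j; split; [lia|auto].
- exists n; split; [lia|auto]. Qed.

Lemma rsum_swap n m (f : nat -> nat -> R) :
  rsum n (fun i => rsum m (fun j => f i j)) = rsum m (fun j => rsum n (fun i => f i j)).
Proof. induction n; simpl.
- rewrite rsum_zero; auto.
- rewrite IHn, <- rsum_plus; auto. Qed.

Lemma rsum_split n t f : (t < n)%nat -> rsum n f = rsumT n t f + f t.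
Proof. unfold rsumT. induction n; simpl; intros H; [lia|].
destruct (Nat.eq_dec t n) as [->|Hne].
- rewrite Nat.eqb_refl. replace (rsum n (fun m => if Nat.eqb m n then 0 else f m)) with (rsum n f); [lra|].
  apply rsum_ext; intros j Hj. destruct (Nat.eqb_spec j n); [lia|auto].
- rewrite IHn by lia. destruct (Nat.eqb_spec n t); [lia|lra]. Qed.

Lemma rsum_delta n x v : (x < n)%nat -> rsum n (fun m => (if Nat.eqb x m then 1 else 0) * v m) = v x.
Proof. induction n; simpl; intros H; [lia|].
destruct (Nat.eq_dec x n) as [->|Hne].
- rewrite Nat.eqb_refl. rewrite (rsum_ext n _ (fun _ => 0)), rsum_zero; [lra|].
  intros j Hj. destruct (Nat.eqb_spec n j); [lia|lra].
- rewrite IHn by lia. destruct (Nat.eqb_spec x n); [lia|lra]. Qed.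

Lemma is_series_plusR a b la lb : is_series a la -> is_series b lb ->
  is_series (fun k => a k + b k) (la + lb).
Proof. intros. apply (is_series_plus a b la lb); auto. Qed.

Lemma is_series_scalR c a l : is_series a l -> is_series (fun k => c * a k) (c * l).
Proof. intros. apply (is_series_scal c a l); auto. Qed.

Lemma is_series_rsum n (f : nat -> nat -> R) l :
  (forall j, (j < n)%nat -> is_series (f j) (l j)) ->
  is_series (fun k => rsum n (fun j => f j k)) (rsum n l).
Proof. induction n; simpl; intros H.
- apply is_series_Reals. intros e He; exists 0%nat; intros.
  assert (E: forall m, sum_f_R0 (fun _ : nat => 0) m = 0) by (induction m; simpl; lra).
  unfold R_dist. rewrite E, Rminus_0_r, Rabs_R0. auto.
- apply is_series_plusR; [apply IHn; intros; apply H|apply H]; lia. Qed.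

Lemma is_series_shift1 a l : is_series a l -> is_series (fun k => a (S k)) (l - a 0%nat).
Proof. intros H. apply is_series_incr_1. match goal with |- is_series _ ?x => replace x with l by (unfold plus; simpl; lra) end; auto. Qed.

Lemma is_series_unshift1 a l : is_series (fun k => a (S k)) l -> is_series a (l + a 0%nat).
Proof. intros H. apply is_series_decr_1. match goal with |- is_series _ ?x => replace x with l by (unfold plus, opp; simpl; lra) end; auto. Qed.

Lemma is_series_shiftn K a l : is_series a l ->
  is_series (fun k => a (K + k)%nat) (l - rsum K a).
Proof. revert a l; induction K; intros a l H; simpl.
- rewrite Rminus_0_r. auto.
- apply is_series_shift1 in H. apply IHK in H.
  replace (l - (rsum K a + a K)) with (l - a 0%nat - rsum K (fun k => a (S k))).
  + exact H.
  + clear. assert (forall a : nat -> R, rsum K a + a K = a 0%nat + rsum K (fun k => a (S k))).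
    { induction K; intros; simpl; [lra|]. rewrite IHK. lra. }
    rewrite H; lra. Qed.

Lemma is_series_unshiftn K a l : is_series (fun k => a (K + k)%nat) l -> is_series a (l + rsum K a).
Proof. intros H. destruct (ex_series_incr_n a K) as [_ H2].
assert (E: ex_series a) by (apply H2; eexists; eauto).
destruct E as [l' Hl']. pose proof (is_series_shiftn K a l' Hl').
pose proof (is_series_unique _ _ H0). pose proof (is_series_unique _ _ H).
replace (l + rsum K a) with l'; auto. lra. Qed.

Lemma is_series_nonneg_le a l k : (forall k, 0 <= a k) -> is_series a l -> a k <= l.
Proof. intros Hp H. apply is_series_Reals in H.
assert (a k <= sum_f_R0 a k).
{ destruct k; simpl; [lra|]. assert (0 <= sum_f_R0 a k). { apply cond_pos_sum; auto. } lra. }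
assert (sum_f_R0 a k <= l). { apply (growing_ineq (sum_f_R0 a)); auto. intro m; simpl.
  specialize (Hp (S m)); lra. }
lra. Qed.

Lemma is_series_le_gen a b la lb : (forall k, a k <= b k) -> is_series a la -> is_series b lb -> la <= lb.
Proof. intros Hle Ha Hb.
assert (H: is_series (fun k => b k - a k) (lb - la)).
{ apply (is_series_ext (fun k => b k + (-1) * a k)). intros; lra.
  replace (lb - la) with (lb + (-1)*la) by lra. apply is_series_plusR; auto. apply is_series_scalR; auto. }
assert (0 <= lb - la). { apply is_series_Reals in H. 
  apply Rle_trans with (sum_f_R0 (fun k => b k - a k) 0). simpl; specialize (Hle 0%nat); lra.
  apply growing_ineq; auto. intro m; simpl. specialize (Hle (S m)); lra. }
lra. Qed.

Lemma is_series_0 : is_series (fun _ : nat => 0) 0.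
Proof. apply (is_series_rsum 0 (fun _ _ => 0) (fun _ => 0)). intros; lia. Qed.

Lemma rsum_first M (f : nat -> R) : rsum (S M) f = f 0%nat + rsum M (fun m => f (S m)).
Proof. revert f; induction M; intros; simpl; [lra|]. simpl in IHM. rewrite IHM. lra. Qed.

Lemma sum_f_rsum f N : sum_f_R0 f N = rsum (S N) f.
Proof. induction N; simpl; [lra|]. rewrite IHN; simpl; lra. Qed.

Lemma is_series_bounded_ex a B : (forall k, 0 <= a k) -> (forall M, rsum M a <= B) -> ex_series a.
Proof. intros Hp Hb. apply ex_series_Reals_1.
destruct (growing_cv (sum_f_R0 a)) as [l Hl].
- intro m; simpl; specialize (Hp (S m)); lra.
- exists B. intros x [N ->]. rewrite sum_f_rsum; auto.
- exists l; auto. Qed.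

Lemma is_series_le_bound a l B : is_series a l -> (forall M, rsum M a <= B) -> l <= B.
Proof. intros H Hb. apply is_series_Reals in H.
destruct (Rle_dec l B) as [|Hn]; auto. exfalso.
destruct (H (l - B)) as [N HN]; [lra|]. specialize (HN N (le_n N)).
unfold R_dist in HN. rewrite sum_f_rsum in HN. specialize (Hb (S N)).
apply Rabs_def2 in HN. lra. Qed.

Lemma ssum_eq u l : is_series u l -> ssum u = l.
Proof. intros H. apply is_series_Reals in H. unfold ssum.
destruct excluded_middle_informative as [E|E].
- destruct (constructive_indefinite_description _ E) as [l' Hl']; simpl.
  eapply uniqueness_sum; eauto.
- exfalso; apply E; eauto. Qed.

Ltac dreq := match goal with |- context [Req_EM_T ?a ?b] => destruct (Req_EM_T a b)
  | H: context [Req_EM_T ?a ?b] |- _ => destruct (Req_EM_T a b) end.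

Section Hit.
Variables (n : nat) (P w : nat -> nat -> R) (delta : R) (t : nat).
Hypothesis HPnn : forall i j, (i < n)%nat -> (j < n)%nat -> 0 <= P i j.
Hypothesis HProw : forall i, (i < n)%nat -> rsum n (P i) = 1.
Hypothesis Hdelta : 0 < delta.
Hypothesis Hw : forall i j, (i < n)%nat -> (j < n)%nat -> 0 < P i j ->
          exists k : nat, (1 <= k)%nat /\ w i j = INR k * delta.
Hypothesis Ht : (t < n)%nat.

Notation hit := (hitw n P w t).

Lemma Ppos i j : (i < n)%nat -> (j < n)%nat -> P i j <> 0 -> 0 < P i j.
Proof. intros. pose proof (HPnn i j H H0). lra. Qed.

Lemma hitw_nonneg m c x : (x < n)%nat -> 0 <= hit m c x.
Proof. revert c x; induction m; intros c x Hx; simpl.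
- destruct (Nat.eqb x t); try dreq; lra.
- destruct (Nat.eqb x t); [lra|]. apply rsum_nonneg; intros j Hj.
  apply Rmult_le_pos; auto. Qed.

Lemma hitw_partial M c x : (x < n)%nat -> rsum M (fun m => hit m c x) <= 1.
Proof. revert c x; induction M; intros c x Hx; [simpl; lra|].
rewrite rsum_first. simpl.
destruct (Nat.eqb_spec x t).
- rewrite rsum_zero. dreq; lra.
- rewrite rsum_swap. rewrite <- (HProw x Hx).
  replace (rsum n (fun i => rsum M (fun m => P x i * hit m (c - w x i) i)))
    with (rsum n (fun i => P x i * rsum M (fun m => hit m (c - w x i) i))).
  + assert (rsum n (fun i => P x i * rsum M (fun m => hit m (c - w x i) i)) <= rsum n (P x)); [|lra].
    apply rsum_le; intros j Hj. specialize (IHM (c - w x j) j Hj). specialize (HPnn x j Hx Hj).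
    pose proof (Rmult_le_compat_l _ _ _ HPnn IHM). lra.
  + apply rsum_ext; intros; rewrite rsum_scal; auto. Qed.

Lemma hitw_neg m c x : c < 0 -> (x < n)%nat -> hit m c x = 0.
Proof. revert c x; induction m; intros c x Hc Hx; simpl.
- destruct (Nat.eqb x t); try dreq; lra.
- destruct (Nat.eqb x t); [lra|]. rewrite <- (rsum_zero n). apply rsum_ext; intros j Hj.
  destruct (Req_dec (P x j) 0) as [E|E]; [rewrite E; lra|].
  destruct (Hw x j Hx Hj (Ppos x j Hx Hj E)) as [k [Hk Hwk]].
  rewrite IHm; [lra| |auto]. rewrite Hwk. assert (1 <= INR k) by (apply (le_INR 1); auto).
  nra. Qed.

Lemma walk_mult x p y : (x < n)%nat -> walk_ok n P x p y -> exists K, walk_cost w x p = INR K * delta.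
Proof. revert x; induction p as [|z p IH]; intros x Hx Hwk; simpl in *.
- exists 0%nat; simpl; lra.
- destruct Hwk as [Hz [HP Hr]]. destruct (IH z Hz Hr) as [K HK].
  destruct (Hw x z Hx Hz HP) as [k [_ Hk]]. exists (k + K)%nat. rewrite plus_INR; lra. Qed.

Lemma walk_cost_nonneg x p y : (x < n)%nat -> walk_ok n P x p y -> 0 <= walk_cost w x p.
Proof. intros Hx H. destruct (walk_mult x p y Hx H) as [K ->]. apply Rmult_le_pos; [apply pos_INR|lra]. Qed.

Lemma hitw_walk m c x : (x < n)%nat -> hit m c x <> 0 ->
  exists p, walk_ok n P x p t /\ walk_cost w x p = c.
Proof. revert c x; induction m; intros c x Hx H; simpl in H.
- destruct (Nat.eqb_spec x t); [|lra]. dreq; [|lra].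
  exists nil; simpl; auto.
- destruct (Nat.eqb_spec x t); [lra|]. apply rsum_neq0 in H. destruct H as [j [Hj Hf]].
  assert (P x j <> 0) by (intro E; rewrite E in Hf; lra).
  assert (hit m (c - w x j) j <> 0) by (intro E; rewrite E in Hf; lra).
  destruct (IHm _ _ Hj H0) as [p [Hp Hc]]. exists (j :: p); simpl.
  split; [split; [auto|split; [apply Ppos; auto|auto]]|lra]. Qed.

Lemma walk_hitw x p : (x < n)%nat -> walk_ok n P x p t ->
  exists m c', c' <= walk_cost w x p /\ 0 < hit m c' x.
Proof. revert x; induction p as [|z p IH]; intros x Hx Hwk.
- simpl in Hwk; subst. exists 0%nat, 0. simpl. rewrite Nat.eqb_refl.
  dreq; [lra|]. lra.
- destruct (Nat.eqb_spec x t) as [E|E].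
  + subst. exists 0%nat, 0. split; [apply (walk_cost_nonneg t (z::p) t); auto|].
    simpl. rewrite Nat.eqb_refl. dreq; lra.
  + simpl in Hwk. destruct Hwk as [Hz [HP Hr]]. destruct (IH z Hz Hr) as [m [c' [Hc' Hh]]].
    exists (S m), (w x z + c'). split; [simpl; lra|].
    simpl. destruct (Nat.eqb_spec x t); [contradiction|].
    apply Rlt_le_trans with (P x z * hit m (w x z + c' - w x z) z).
    { replace (w x z + c' - w x z) with c' by ring. apply Rmult_lt_0_compat; auto. }
    apply (rsum_ge_term n (fun j => P x j * hit m (w x z + c' - w x j) j) z); auto.
    intros j Hj. apply Rmult_le_pos; [auto|apply hitw_nonneg; auto]. Qed.

Definition piR c x := ssum (fun m => hit m c x).

Lemma piR_series c x : (x < n)%nat -> is_series (fun m => hit m c x) (piR c x).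
Proof. intros Hx.
assert (E: ex_series (fun m => hit m c x)).
{ apply (is_series_bounded_ex _ 1); [intros; apply hitw_nonneg; auto|intros; apply hitw_partial; auto]. }
destruct E as [l Hl]. unfold piR. rewrite (ssum_eq _ _ Hl). auto. Qed.

Lemma piR_bounds c x : (x < n)%nat -> 0 <= piR c x <= 1.
Proof. intros Hx. pose proof (piR_series c x Hx). split.
- apply Rle_trans with (hit 0 c x); [apply hitw_nonneg; auto|].
  apply (is_series_nonneg_le (fun m => hit m c x)); auto. intros; apply hitw_nonneg; auto.
- eapply is_series_le_bound; eauto. intros; apply hitw_partial; auto. Qed.

Lemma piR_ge c x m : (x < n)%nat -> hit m c x <= piR c x.
Proof. intros Hx. apply (is_series_nonneg_le (fun m => hit m c x)); [intros; apply hitw_nonneg; auto|].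
apply piR_series; auto. Qed.

Lemma piR_rec c x : (x < n)%nat -> x <> t ->
  piR c x = rsum n (fun j => P x j * piR (c - w x j) j).
Proof. intros Hx Hxt.
assert (H1: is_series (fun m => hit (S m) c x) (rsum n (fun j => P x j * piR (c - w x j) j))).
{ eapply is_series_ext; [|apply (is_series_rsum n (fun j m => P x j * hit m (c - w x j) j))].
  - intros m. simpl. destruct (Nat.eqb_spec x t); [contradiction|auto].
  - intros j Hj. apply is_series_scalR. apply piR_series; auto. }
apply (is_series_unshift1 (fun m => hit m c x)) in H1. simpl in H1. destruct (Nat.eqb_spec x t); [contradiction|].
rewrite Rplus_0_r in H1. apply is_series_unique in H1. rewrite <- H1.
symmetry; apply is_series_unique, piR_series; auto. Qed.

Lemma piR_t c : piR c t = if Req_EM_T c 0 then 1 else 0.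
Proof. apply ssum_eq.
assert (H: is_series (fun m => hit (S m) c t) 0).
{ eapply is_series_ext; [|apply is_series_0]. intros m; simpl. rewrite Nat.eqb_refl; auto. }
apply (is_series_unshift1 (fun m => hit m c t)) in H. simpl in H. rewrite Nat.eqb_refl in H. rewrite Rplus_0_l in H. auto. Qed.

Lemma piR_neg c x : c < 0 -> (x < n)%nat -> piR c x = 0.
Proof. intros Hc Hx. apply ssum_eq. eapply is_series_ext; [|apply is_series_0].
intros m; simpl. rewrite hitw_neg; auto. Qed.

End Hit.


Lemma bernoulli h k : 0 <= h -> 1 + INR k * h <= (1 + h) ^ k.
Proof. intros Hh. induction k; [simpl; lra|]. rewrite S_INR. simpl (_ ^ S k).
assert (0 <= INR k) by apply pos_INR. nra. Qed.

Lemma ex_series_kq q : 0 < q < 1 -> ex_series (fun k => INR k * q ^ k).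
Proof. intros Hq. set (g := sqrt q).
assert (Hg0 : 0 < g) by (apply sqrt_lt_R0; lra).
assert (Hgg : g * g = q) by (apply sqrt_sqrt; lra).
assert (Hg1 : g < 1) by nra.
set (h := / g - 1).
assert (Hh : 0 < h). { unfold h. assert (1 < / g). { rewrite <- Rinv_1. apply Rinv_lt_contravar; lra. } lra. }
assert (Hb : forall k, INR k * g ^ k <= / h).
{ intros k. pose proof (bernoulli h k (Rlt_le _ _ Hh)).
  replace (1 + h) with (/ g) in H by (unfold h; ring).
  rewrite pow_inv in H. assert (0 < g ^ k) by (apply pow_lt; auto).
  assert (INR k * h * g ^ k <= 1).
  { apply Rmult_le_compat_r with (r := g ^ k) in H; [|lra].
    rewrite Rinv_l in H by lra. assert (0 <= INR k) by apply pos_INR. nra. }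
  apply Rmult_le_reg_r with h; auto. rewrite Rinv_l by lra. nra. }
apply (@ex_series_le R_AbsRing R_CompleteNormedModule _ (fun k => / h * g ^ k)).
- intros k. unfold norm; simpl. unfold abs; simpl.
  assert (0 <= INR k) by apply pos_INR. assert (0 < q ^ k) by (apply pow_lt; lra).
  rewrite Rabs_pos_eq by nra. rewrite <- Hgg, Rpow_mult_distr.
  specialize (Hb k). assert (0 < g ^ k) by (apply pow_lt; auto). nra.
- apply (ex_series_ext (fun k => g ^ k * / h)); [intros; simpl; ring|]. apply ex_series_scal_r. apply ex_series_geom. rewrite Rabs_pos_eq; lra. Qed.

Lemma is_series_zero_prefix K a l : (forall k, (k < K)%nat -> a k = 0) ->
  is_series (fun i => a (K + i)%nat) l -> is_series a l.
Proof. intros H0 H. apply is_series_unshiftn in H.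
replace (rsum K a) with 0 in H; [rewrite Rplus_0_r in H; auto|].
rewrite <- (rsum_zero K). apply rsum_ext. intros; symmetry; auto. Qed.


Section Gen.
Variables (n : nat) (P w : nat -> nat -> R) (delta : R) (t : nat) (alpha : R).
Hypothesis HPnn : forall i j, (i < n)%nat -> (j < n)%nat -> 0 <= P i j.
Hypothesis HProw : forall i, (i < n)%nat -> rsum n (P i) = 1.
Hypothesis Hdelta : 0 < delta.
Hypothesis Hw : forall i j, (i < n)%nat -> (j < n)%nat -> 0 < P i j ->
          exists k : nat, (1 <= k)%nat /\ w i j = INR k * delta.
Hypothesis Ht : (t < n)%nat.
Hypothesis Ha : 0 < alpha < 1.

Definition beta := Rpower alpha delta.
Definition pik k x := piR n P w t (INR k * delta) x.

Lemma beta_bounds : 0 < beta < 1.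
Proof. unfold beta, Rpower. split; [apply exp_pos|].
rewrite <- exp_0. apply exp_increasing.
assert (ln alpha < 0) by (rewrite <- ln_1; apply ln_increasing; lra). nra. Qed.

Lemma Rpower_K K : Rpower alpha (INR K * delta) = beta ^ K.
Proof. unfold beta. rewrite Rmult_comm, <- Rpower_mult, Rpower_pow; auto.
unfold Rpower; apply exp_pos. Qed.

Lemma pik_bounds k x : (x < n)%nat -> 0 <= pik k x <= 1.
Proof. intros; apply piR_bounds; auto. Qed.

Lemma pik_t k : pik k t = if Nat.eqb k 0 then 1 else 0.
Proof. unfold pik. rewrite piR_t. destruct k; cbn [Nat.eqb].
- dreq; [auto|exfalso; apply n0; simpl; ring].
- dreq; [|auto]. exfalso. assert (0 < INR (S k)) by (apply lt_0_INR; lia). nra. Qed.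

Definition phi x := Series (fun k => beta ^ k * pik k x).
Definition psi x := Series (fun k => INR k * delta * beta ^ k * pik k x).

Lemma phi_series x : (x < n)%nat -> is_series (fun k => beta ^ k * pik k x) (phi x).
Proof. intros Hx. apply Series_correct. pose proof beta_bounds.
apply (@ex_series_le R_AbsRing R_CompleteNormedModule _ (fun k => beta ^ k)).
- intros k. unfold norm; simpl. unfold abs; simpl. pose proof (pik_bounds k x Hx).
  assert (0 < beta ^ k) by (apply pow_lt; lra).
  rewrite Rabs_pos_eq by nra. nra.
- apply ex_series_geom. rewrite Rabs_pos_eq; lra. Qed.

Lemma psi_series x : (x < n)%nat -> is_series (fun k => INR k * delta * beta ^ k * pik k x) (psi x).
Proof. intros Hx. apply Series_correct. pose proof beta_bounds.
apply (@ex_series_le R_AbsRing R_CompleteNormedModule _ (fun k => (INR k * beta ^ k) * delta)).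
- intros k. unfold norm; simpl. unfold abs; simpl. pose proof (pik_bounds k x Hx).
  assert (0 < beta ^ k) by (apply pow_lt; lra). assert (0 <= INR k) by apply pos_INR.
  assert (0 <= INR k * beta ^ k) by nra.
  rewrite Rabs_pos_eq. 2: { apply Rmult_le_pos; [|lra]. nra. }
  replace (INR k * delta * beta ^ k * pik k x) with ((INR k * beta ^ k) * delta * pik k x) by ring.
  assert (0 <= INR k * beta ^ k * delta) by nra. nra.
- apply ex_series_scal_r. apply ex_series_kq; auto. Qed.

Lemma phi_nonneg x : (x < n)%nat -> 0 <= phi x.
Proof. intros Hx. pose proof beta_bounds. apply Rle_trans with (beta ^ 0 * pik 0 x).
- simpl. pose proof (pik_bounds 0 x Hx); lra.
- apply (is_series_nonneg_le (fun k => beta ^ k * pik k x)); [|apply phi_series; auto].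
  intros k. pose proof (pik_bounds k x Hx). assert (0 < beta ^ k) by (apply pow_lt; lra). nra. Qed.

Lemma phi_t : phi t = 1.
Proof. apply is_series_unique.
apply (is_series_ext (fun k => if Nat.eqb k 0 then 1 else 0)).
{ intros k. rewrite pik_t. destruct k; simpl; ring. }
pose proof (is_series_unshift1 (fun k => if Nat.eqb k 0 then 1 else 0) 0 is_series_0) as H.
simpl in H. rewrite Rplus_0_l in H. exact H. Qed.

Lemma psi_t : psi t = 0.
Proof. apply is_series_unique. eapply is_series_ext; [|apply is_series_0].
intros k. simpl. rewrite pik_t. destruct k; simpl; ring. Qed.

Lemma pik_shift K x k : (x < n)%nat ->
  piR n P w t (INR k * delta - INR K * delta) x =
  if (k <? K)%nat then 0 else pik (k - K) x.
Proof. intros Hx. destruct (Nat.ltb_spec k K).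
- apply (piR_neg n P w delta t); auto. apply lt_INR in H. nra.
- unfold pik. f_equal. rewrite minus_INR by auto. ring. Qed.

Lemma phi_rec x : (x < n)%nat -> x <> t ->
  phi x = rsum n (fun j => Pev P w alpha x j * phi j).
Proof. intros Hx Hxt. apply is_series_unique.
eapply is_series_ext; [|apply (is_series_rsum n (fun j k => P x j * (beta ^ k * piR n P w t (INR k * delta - w x j) j)))].
- intros k. simpl. unfold pik. rewrite (piR_rec n P w t HPnn HProw) by auto.
  rewrite <- rsum_scal. apply rsum_ext; intros; ring.
- intros j Hj. unfold Pev. destruct (Req_dec (P x j) 0) as [E|E].
  + rewrite E, !Rmult_0_l. eapply is_series_ext; [|apply is_series_0]. intros; simpl; ring.
  + destruct (Hw x j Hx Hj (Ppos n P HPnn x j Hx Hj E)) as [K [_ HK]].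
    rewrite HK, Rpower_K, Rmult_assoc. apply is_series_scalR.
    apply (is_series_zero_prefix K).
    * intros k Hk. rewrite pik_shift by auto. apply Nat.ltb_lt in Hk. rewrite Hk. ring.
    * eapply is_series_ext; [|apply is_series_scalR with (c := beta ^ K); apply phi_series; auto].
      intros i. simpl. rewrite pik_shift by auto.
      destruct (Nat.ltb_spec (K + i) K); [lia|]. replace (K + i - K)%nat with i by lia.
      rewrite pow_add. ring. Qed.

Lemma psi_rec x : (x < n)%nat -> x <> t ->
  psi x = rsum n (fun j => Pev P w alpha x j * (w x j * phi j + psi j)).
Proof. intros Hx Hxt. apply is_series_unique.
eapply is_series_ext; [|apply (is_series_rsum n (fun j k => P x j * (INR k * delta * beta ^ k * piR n P w t (INR k * delta - w x j) j)))].
- intros k. simpl. unfold pik. rewrite (piR_rec n P w t HPnn HProw) by auto.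
  rewrite <- rsum_scal. apply rsum_ext; intros; ring.
- intros j Hj. unfold Pev. destruct (Req_dec (P x j) 0) as [E|E].
  + rewrite E, !Rmult_0_l. eapply is_series_ext; [|apply is_series_0]. intros; simpl; ring.
  + destruct (Hw x j Hx Hj (Ppos n P HPnn x j Hx Hj E)) as [K [_ HK]].
    rewrite HK, Rpower_K, Rmult_assoc. apply is_series_scalR.
    apply (is_series_zero_prefix K).
    * intros k Hk. rewrite pik_shift by auto. apply Nat.ltb_lt in Hk. rewrite Hk. ring.
    * eapply is_series_ext; [|apply is_series_scalR with (c := beta ^ K);
         apply is_series_plusR; [apply is_series_scalR with (c := INR K * delta); apply phi_series; auto|apply psi_series; auto]].
      intros i. simpl. rewrite pik_shift by auto.
      destruct (Nat.ltb_spec (K + i) K); [lia|]. replace (K + i - K)%nat with i by lia.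
      rewrite pow_add, plus_INR. ring. Qed.

End Gen.


Fixpoint mx (n : nat) (f : nat -> R) : R :=
  match n with O => 0 | S k => Rmax (mx k f) (f k) end.

Lemma mx_ge n f j : (j < n)%nat -> f j <= mx n f.
Proof. induction n; simpl; intros; [lia|]. destruct (Nat.eq_dec j n) as [->|].
- apply Rmax_r. - eapply Rle_trans; [apply IHn; lia|apply Rmax_l]. Qed.

Lemma mx_nonneg n f : 0 <= mx n f.
Proof. induction n; simpl; [lra|]. eapply Rle_trans; [apply IHn|apply Rmax_l]. Qed.

Lemma mx_le n f B : (forall j, (j < n)%nat -> f j <= B) -> 0 <= B -> mx n f <= B.
Proof. induction n; simpl; intros H HB; [lra|]. apply Rmax_lub; [apply IHn; auto|apply H; lia]. Qed.

Lemma rsum_abs n f : Rabs (rsum n f) <= rsum n (fun j => Rabs (f j)).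
Proof. induction n; simpl; [rewrite Rabs_R0; lra|].
eapply Rle_trans; [apply Rabs_triang|]. lra. Qed.

Lemma rsumT_ext n t f g : (forall j, (j < n)%nat -> j <> t -> f j = g j) -> rsumT n t f = rsumT n t g.
Proof. intros H. unfold rsumT. apply rsum_ext; intros j Hj. destruct (Nat.eqb_spec j t); auto. Qed.

Lemma rsumT_minus n t f g : rsumT n t (fun j => f j - g j) = rsumT n t f - rsumT n t g.
Proof. unfold rsumT. replace (rsum n (fun m => if Nat.eqb m t then 0 else f m) - rsum n (fun m => if Nat.eqb m t then 0 else g m))
 with (rsum n (fun m => if Nat.eqb m t then 0 else f m) + (-1) * rsum n (fun m => if Nat.eqb m t then 0 else g m)) by ring.
rewrite <- rsum_scal, <- rsum_plus. apply rsum_ext; intros m _. destruct (Nat.eqb m t); ring. Qed.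

Lemma rsumT_scal_r n t c f : rsumT n t (fun j => f j * c) = rsumT n t f * c.
Proof. unfold rsumT. rewrite <- rsum_scal_r. apply rsum_ext; intros. destruct (Nat.eqb j t); ring. Qed.

Lemma rsumT_delta n t x v : (x < n)%nat -> x <> t ->
  rsumT n t (fun m => (if Nat.eqb x m then 1 else 0) * v m) = v x.
Proof. intros. unfold rsumT. transitivity ((fun m => if Nat.eqb m t then 0 else v m) x).
2:{ simpl. destruct (Nat.eqb_spec x t); [contradiction|auto]. }
rewrite <- (rsum_delta n x (fun m => if Nat.eqb m t then 0 else v m)) by auto.
apply rsum_ext; intros m _.
destruct (Nat.eqb_spec m t); destruct (Nat.eqb_spec x m); subst; try contradiction; ring. Qed.

Lemma rsumT_swap n t (f : nat -> nat -> R) :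
  rsumT n t (fun i => rsumT n t (fun j => f i j)) = rsumT n t (fun j => rsumT n t (fun i => f i j)).
Proof. unfold rsumT.
transitivity (rsum n (fun i => rsum n (fun j => if Nat.eqb i t then 0 else if Nat.eqb j t then 0 else f i j))).
- apply rsum_ext; intros i _. destruct (Nat.eqb i t); [rewrite rsum_zero; auto|auto].
- rewrite rsum_swap. apply rsum_ext; intros j _. destruct (Nat.eqb j t).
  + rewrite (rsum_ext n _ (fun _ => 0)); [apply rsum_zero|]. intros i _. destruct (Nat.eqb i t); auto.
  + apply rsum_ext; intros; auto. Qed.

Lemma rsum_splitT n t f : (t < n)%nat -> rsum n f = rsumT n t f + f t.
Proof. apply rsum_split. Qed.

Lemma rsum_zero_terms n f : (forall j, (j < n)%nat -> 0 <= f j) -> rsum n f = 0 ->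
  forall j, (j < n)%nat -> f j = 0.
Proof. intros Hp H j Hj. pose proof (rsum_ge_term n f j Hp Hj). pose proof (Hp j Hj). lra. Qed.

Section Lin.
Variables (n : nat) (P w : nat -> nat -> R) (delta : R) (t : nat) (alpha : R).
Hypothesis HPnn : forall i j, (i < n)%nat -> (j < n)%nat -> 0 <= P i j.
Hypothesis HProw : forall i, (i < n)%nat -> rsum n (P i) = 1.
Hypothesis Hdelta : 0 < delta.
Hypothesis Hw : forall i j, (i < n)%nat -> (j < n)%nat -> 0 < P i j ->
          exists k : nat, (1 <= k)%nat /\ w i j = INR k * delta.
Hypothesis Ht : (t < n)%nat.
Hypothesis Ha : 0 < alpha < 1.
Variable F : nat -> nat -> R.
Hypothesis HF : is_fundamental n t (Pev P w alpha) F.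

Notation Pa := (Pev P w alpha).
Notation bt := (beta delta alpha).
Notation phi := (phi n P w delta t alpha).
Notation psi := (psi n P w delta t alpha).

Lemma Pa_nonneg i j : (i < n)%nat -> (j < n)%nat -> 0 <= Pa i j.
Proof. intros. unfold Pev. apply Rmult_le_pos; auto. unfold Rpower; left; apply exp_pos. Qed.

Lemma Pa_row i : (i < n)%nat -> rsum n (Pa i) <= bt.
Proof. intros Hi. pose proof (beta_bounds delta alpha Hdelta Ha).
apply Rle_trans with (rsum n (fun j => P i j * bt)).
- apply rsum_le; intros j Hj. unfold Pev. destruct (Req_dec (P i j) 0) as [E|E].
  + rewrite E; lra.
  + destruct (Hw i j Hi Hj (Ppos n P HPnn i j Hi Hj E)) as [K [HK1 HK]].
    rewrite HK, (Rpower_K delta alpha). apply Rmult_le_compat_l; auto.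
    destruct K; [lia|]. simpl. assert (bt ^ K <= 1).
    { destruct K; [simpl; lra|]. pose proof (pow_lt_1_compat bt (S K) ltac:(lra) ltac:(lia)); lra. }
    assert (0 <= bt ^ K) by (apply pow_le; lra). nra.
- rewrite rsum_scal_r, HProw by auto; lra. Qed.

Lemma uniq v : (forall x, (x < n)%nat -> x <> t -> v x = rsumT n t (fun j => Pa x j * v j)) ->
  forall x, (x < n)%nat -> x <> t -> v x = 0.
Proof. intros Hv. pose proof (beta_bounds delta alpha Hdelta Ha).
set (g := fun j => if Nat.eqb j t then 0 else Rabs (v j)). set (M := mx n g).
assert (HM0 : 0 <= M) by apply mx_nonneg.
assert (Hb : forall x, (x < n)%nat -> x <> t -> Rabs (v x) <= bt * M).
{ intros x Hx Hxt. rewrite Hv by auto. unfold rsumT. eapply Rle_trans; [apply rsum_abs|].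
  apply Rle_trans with (rsum n (fun j => Pa x j * M)).
  - apply rsum_le; intros j Hj. pose proof (Pa_nonneg x j Hx Hj).
    destruct (Nat.eqb_spec j t). + rewrite Rabs_R0; nra.
    + rewrite Rabs_mult, (Rabs_pos_eq (Pa x j)) by auto. apply Rmult_le_compat_l; auto.
      pose proof (mx_ge n g j Hj). unfold g in H1. destruct (Nat.eqb_spec j t); [contradiction|auto].
  - rewrite rsum_scal_r. pose proof (Pa_row x Hx). nra. }
assert (M <= bt * M). { apply mx_le; [|nra]. intros j Hj. unfold g. destruct (Nat.eqb_spec j t); [nra|auto]. }
assert (M = 0) by nra.
intros x Hx Hxt. specialize (Hb x Hx Hxt). rewrite H1, Rmult_0_r in Hb.
pose proof (Rabs_pos (v x)). apply Rabs_eq_0. lra. Qed.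

Lemma F_solve b u :
  (forall x, (x < n)%nat -> x <> t -> u x - rsumT n t (fun i => Pa x i * u i) = b x) ->
  forall x, (x < n)%nat -> x <> t -> u x = rsumT n t (fun m => F x m * b m).
Proof. intros Hu.
set (y := fun x => rsumT n t (fun m => F x m * b m)).
assert (Hy : forall x, (x < n)%nat -> x <> t -> y x - rsumT n t (fun i => Pa x i * y i) = b x).
{ intros x Hx Hxt. rewrite <- (rsumT_delta n t x y) by auto. rewrite <- rsumT_minus.
  transitivity (rsumT n t (fun i => rsumT n t (fun m => ((if Nat.eqb x i then 1 else 0) - Pa x i) * F i m * b m))).
  - apply rsumT_ext; intros i Hi Hit. unfold y. rewrite <- Rmult_minus_distr_r.
    unfold rsumT. rewrite <- rsum_scal. apply rsum_ext; intros. destruct (Nat.eqb j t); ring.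
  - rewrite rsumT_swap. rewrite <- (rsumT_delta n t x b) by auto. apply rsumT_ext; intros m Hm Hmt.
    rewrite rsumT_scal_r. f_equal. apply HF; auto. }
set (v := fun x => u x - y x).
assert (Hv : forall x, (x < n)%nat -> x <> t -> v x = rsumT n t (fun j => Pa x j * v j)).
{ intros x Hx Hxt. unfold v. replace (rsumT n t (fun j => Pa x j * (u j - y j))) with
   (rsumT n t (fun j => Pa x j * u j) - rsumT n t (fun j => Pa x j * y j)).
  - specialize (Hu x Hx Hxt). specialize (Hy x Hx Hxt). lra.
  - rewrite <- rsumT_minus. apply rsumT_ext; intros; ring. }
intros x Hx Hxt. pose proof (uniq v Hv x Hx Hxt). unfold v, y in H. lra. Qed.

Lemma Q_phi x : (x < n)%nat -> Qabs n t Pa F x = phi x.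
Proof. intros Hx. unfold Qabs. destruct (Nat.eqb_spec x t).
- subst. rewrite phi_t; auto.
- symmetry. apply (F_solve (fun m => Pa m t) phi); auto.
  intros y Hy Hyt. rewrite (phi_rec n P w delta t alpha) at 1 by auto.
  rewrite (rsum_splitT n t) by auto. rewrite phi_t; auto. ring. Qed.

Definition cc m := rsum n (fun i => Pa m i * w m i * phi i).

Lemma psi_F s : (s < n)%nat -> s <> t -> psi s = rsumT n t (fun m => F s m * cc m).
Proof. intros Hs Hst. apply (F_solve cc psi); auto.
intros y Hy Hyt. rewrite (psi_rec n P w delta t alpha) at 1 by auto.
replace (rsum n (fun j => Pa y j * (w y j * phi j + psi j))) with
  (rsum n (fun j => Pa y j * w y j * phi j) + rsum n (fun i => Pa y i * psi i))
  by (rewrite <- rsum_plus; apply rsum_ext; intros; ring).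
rewrite (rsum_splitT n t (fun i => Pa y i * psi i)) by auto. rewrite psi_t; auto.
unfold cc. ring. Qed.

Lemma term_eq m : (m < n)%nat -> m <> t -> phi m * rcost n t Pa w F m = cc m.
Proof. intros Hm Hmt. unfold rcost.
rewrite (rsum_ext n _ (fun i => (Pa m i * w m i * phi i) * / phi m)).
2:{ intros i Hi. rewrite !Q_phi by auto. unfold Rdiv; ring. }
rewrite rsum_scal_r. destruct (Req_dec (phi m) 0) as [E|E].
- rewrite E, Rmult_0_l. unfold cc. symmetry.
  assert (H0 : rsum n (fun j => Pa m j * phi j) = 0) by (rewrite <- (phi_rec n P w delta t alpha) by auto; auto).
  assert (Hphi: forall j, (j < n)%nat -> 0 <= phi j) by (intros; eapply phi_nonneg; eauto).
  pose proof (rsum_zero_terms n _ (fun j Hj => Rmult_le_pos _ _ (Pa_nonneg m j Hm Hj)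
      (Hphi j Hj)) H0) as Z.
  rewrite <- (rsum_zero n). apply rsum_ext; intros i Hi. specialize (Z i Hi).
  replace (Pa m i * w m i * phi i) with (w m i * (Pa m i * phi i)) by ring. rewrite Z; ring.
- unfold cc. field. auto. Qed.

Lemma U_eq s : (s < n)%nat -> s <> t -> phi s <> 0 -> Uavoid n t Pa w F s = psi s / phi s.
Proof. intros Hs Hst Hp. unfold Uavoid. rewrite psi_F by auto. unfold Rdiv. rewrite <- rsumT_scal_r.
apply rsumT_ext; intros m Hm Hmt. rewrite !Q_phi by auto. rewrite <- term_eq by auto. field. auto. Qed.

End Lin.


Lemma tails_identity (a : nat -> R) D K :
  rsum K (fun k => D - rsum (S k) a) =
  rsum (S K) (fun m => INR m * a m) + INR K * (D - rsum (S K) a).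
Proof. induction K.
- simpl. ring.
- change (rsum (S K) (fun k => D - rsum (S k) a)) with
    (rsum K (fun k => D - rsum (S k) a) + (D - rsum (S K) a)).
  rewrite IHK. change (rsum (S (S K)) (fun m => INR m * a m)) with
    (rsum (S K) (fun m => INR m * a m) + INR (S K) * a (S K)).
  change (rsum (S (S K)) a) with (rsum (S K) a + a (S K)). rewrite S_INR. ring. Qed.

Lemma tails_series a D A : (forall m, 0 <= a m) -> is_series a D ->
  is_series (fun m => INR m * a m) A ->
  is_series (fun k => D - rsum (S k) a) A.
Proof. intros Hp HD HA.
assert (HT : forall j, 0 <= D - rsum j a).
{ intros j. pose proof (is_series_shiftn j a D HD).
  apply Rle_trans with (a (j + 0)%nat); [auto|]. apply (is_series_nonneg_le (fun i => a (j + i)%nat)); auto. }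
assert (HE : forall K, INR K * (D - rsum (S K) a) <= A - rsum (S K) (fun m => INR m * a m)).
{ intros K. pose proof (is_series_shiftn (S K) a D HD) as H1.
  pose proof (is_series_shiftn (S K) (fun m => INR m * a m) A HA) as H2.
  apply is_series_scalR with (c := INR K) in H1.
  eapply is_series_le_gen; [|exact H1|exact H2]. intros i. cbv beta.
  apply Rmult_le_compat_r; [auto|]. apply le_INR. lia. }
apply is_series_Reals in HA. apply is_series_Reals. intros eps Heps.
destruct (HA eps Heps) as [N HN]. exists N. intros K HK.
rewrite sum_f_rsum. rewrite tails_identity.
specialize (HN (S K) ltac:(lia)). rewrite sum_f_rsum in HN. unfold R_dist in *.
specialize (HE (S K)). assert (0 <= INR (S K) * (D - rsum (S (S K)) a)) by (apply Rmult_le_pos; [apply pos_INR|auto]).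
apply Rabs_def2 in HN. apply Rabs_def1; lra. Qed.

Ltac toR := match goal with |- ?x = ?y => change (@eq R x y) end.

Theorem mainTheorem3
  (n : nat) (P w : nat -> nat -> R) (delta : R) (s t : nat) (L : R)
  (HPnn : forall i j, (i < n)%nat -> (j < n)%nat -> 0 <= P i j)
  (HProw : forall i, (i < n)%nat -> rsum n (P i) = 1)
  (Hdelta : 0 < delta)
  (Hw : forall i j, (i < n)%nat -> (j < n)%nat -> 0 < P i j ->
          exists k : nat, (1 <= k)%nat /\ w i j = INR k * delta)
  (Hs : (s < n)%nat) (Ht : (t < n)%nat) (Hst : s <> t)
  (Hpath : exists p, walk_ok n P s p t)
  (HL : is_min_cost n P w s t L) :
  forall alpha : R, 0 < alpha < 1 ->
  forall F : nat -> nat -> R, is_fundamental n t (Pev P w alpha) F ->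
  let U := Uavoid n t (Pev P w alpha) w F s in
  let l := fun i : nat => L + INR i * delta in
  let Pr := PrCost n P w s t in
  exists (D : R) (N : nat -> R),
    0 < D /\
    infinite_sum (fun i => Rpower alpha (l i) * Pr (l i)) D /\
    (forall j, infinite_sum (fun i => Rpower alpha (l i) * Pr (l (i + j)%nat)) (N j)) /\
    (forall j, (1 <= j)%nat -> 0 <= N j / D) /\
    infinite_sum (fun k => delta * Rpower alpha (INR (S k) * delta) * (N (S k) / D)) (U - L) /\
    L <= U.
Proof.
intros alpha Ha F HF U l Pr.
destruct HL as [[p0 [Hp0 Hc0]] Hmin].
destruct (walk_mult n P w delta Hw s p0 t Hs Hp0) as [k0 Hk0].
assert (HLk : L = INR k0 * delta) by congruence.
pose proof (beta_bounds delta alpha Hdelta Ha) as Hb. set (b := beta delta alpha) in *.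
set (pk := fun k => pik n P w delta t k s).
assert (Hpk : forall k, 0 <= pk k <= 1) by (intros; apply pik_bounds; auto).
set (a := fun m => b ^ (k0 + m) * pk (k0 + m)%nat).
assert (Hbp : forall k, 0 < b ^ k) by (intros; apply pow_lt; lra).
assert (Hapos : forall m, 0 <= a m) by (intros m; unfold a; specialize (Hpk (k0+m)%nat); specialize (Hbp (k0+m)%nat); nra).
assert (Hzero : forall k, (k < k0)%nat -> pk k = 0).
{ intros k Hk. unfold pk, pik, piR. apply ssum_eq. eapply is_series_ext; [|apply is_series_0].
  intros m. simpl. destruct (Req_dec (hitw n P w t m (INR k * delta) s) 0) as [E|E]; [auto|].
  exfalso. destruct (hitw_walk n P w t HPnn m _ s Hs E) as [p [Hp Hc]].
  specialize (Hmin p Hp). rewrite Hc, HLk in Hmin. apply lt_INR in Hk. nra. }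
assert (Hposk : 0 < pk k0).
{ destruct (walk_hitw n P w delta t HPnn Hdelta Hw s p0 Hs Hp0) as [m [c' [Hc' Hh]]].
  assert (Hne : hitw n P w t m c' s <> 0) by lra.
  destruct (hitw_walk n P w t HPnn m _ s Hs Hne) as [p [Hp Hc]].
  specialize (Hmin p Hp). assert (Hcl : c' = L) by lra. rewrite Hcl in Hh.
  eapply Rlt_le_trans; [exact Hh|]. unfold pk, pik. rewrite <- HLk. apply piR_ge; auto. }
set (Dv := phi n P w delta t alpha s).
assert (HD : is_series a Dv).
{ pose proof (is_series_shiftn k0 _ _ (phi_series n P w delta t alpha HPnn HProw Hdelta Ha s Hs)) as H.
  rewrite (rsum_ext k0 _ (fun _ => 0)), rsum_zero, Rminus_0_r in H; [exact H|].
  intros j Hj. cbv beta. fold (pk j). rewrite Hzero; auto; ring. }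
assert (HDpos : 0 < Dv).
{ apply Rlt_le_trans with (a 0%nat); [|apply (is_series_nonneg_le a); auto].
  unfold a. rewrite Nat.add_0_r. specialize (Hbp k0). nra. }
set (A := (psi n P w delta t alpha s - INR k0 * delta * Dv) / delta).
assert (HA : is_series (fun m => INR m * a m) A).
{ pose proof (is_series_shiftn k0 _ _ (psi_series n P w delta t alpha HPnn HProw Hdelta Ha s Hs)) as H.
  rewrite (rsum_ext k0 _ (fun _ => 0)), rsum_zero, Rminus_0_r in H.
  2:{ intros j Hj. cbv beta. fold (pk j). rewrite Hzero; auto; ring. }
  pose proof (is_series_plusR _ _ _ _ (is_series_scalR (/ delta) _ _ H) (is_series_scalR (- INR k0) _ _ HD)) as H2.
  assert (E : forall m, / delta * (INR (k0 + m) * delta * b ^ (k0 + m) * pk (k0 + m)%nat) + - INR k0 * a m = INR m * a m).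
  { intros m. unfold a. rewrite plus_INR. field. lra. }
  replace A with (/ delta * psi n P w delta t alpha s + - INR k0 * Dv) by (unfold A; field; repeat split; lra).
  exact (is_series_ext _ _ _ E H2). }
assert (HAnn : 0 <= A).
{ apply Rle_trans with (INR 0 * a 0%nat); [simpl; lra|].
  apply (is_series_nonneg_le (fun m => INR m * a m)); auto. intros m; apply Rmult_le_pos; auto; apply pos_INR. }
assert (HT : is_series (fun k => Dv - rsum (S k) a) A) by (apply tails_series; auto).
assert (HTnn : forall j, 0 <= Dv - rsum j a).
{ intros j. pose proof (is_series_shiftn j a Dv HD).
  apply Rle_trans with (a (j + 0)%nat); [auto|]. apply (is_series_nonneg_le (fun i => a (j + i)%nat)); auto. }
assert (Hl : forall i, l i = INR (k0 + i) * delta) by (intros; unfold l; rewrite plus_INR, HLk; ring).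
assert (Hterm : forall i j, Rpower alpha (l i) * Pr (l (i + j)%nat) = / b ^ j * a (j + i)%nat).
{ intros i j. rewrite !Hl, Rpower_K. fold b.
  change (Pr (INR (k0 + (i + j)) * delta)) with (pk (k0 + (i + j))%nat).
  unfold a. replace (k0 + (j + i))%nat with (k0 + i + j)%nat by lia.
  replace (k0 + (i + j))%nat with (k0 + i + j)%nat by lia. rewrite !pow_add.
  field. specialize (Hbp j); lra. }
assert (HU : U = psi n P w delta t alpha s / Dv) by (unfold U; eapply U_eq; eauto; unfold Dv in HDpos; lra).
exists Dv, (fun j => / b ^ j * (Dv - rsum j a)).
split; [auto|]. split; [|split; [|split; [|split]]].
- apply is_series_Reals. eapply is_series_ext; [|exact HD].
  intros i. toR. pose proof (Hterm i 0%nat) as E. rewrite Nat.add_0_r in E. rewrite E.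
  replace (0 + i)%nat with i by lia. rewrite pow_O. field.
- intros j. apply is_series_Reals. eapply is_series_ext; [|apply is_series_scalR; exact (is_series_shiftn j a Dv HD)].
  intros i. toR. rewrite Hterm. auto.
- intros j _. unfold Rdiv. apply Rmult_le_pos; [|left; apply Rinv_0_lt_compat; auto].
  apply Rmult_le_pos; [left; apply Rinv_0_lt_compat; auto|auto].
- apply is_series_Reals.
  replace (U - L) with (delta / Dv * A) by (rewrite HU, HLk; unfold A; field; repeat split; lra).
  eapply is_series_ext; [|apply is_series_scalR; exact HT].
  intros k. toR. cbv beta. rewrite Rpower_K. fold b. field; repeat split; try apply pow_nonzero; lra.
- assert (U - L = delta / Dv * A) by (rewrite HU, HLk; unfold A; field; repeat split; lra).
  assert (0 <= delta / Dv * A); [|lra].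
  apply Rmult_le_pos; auto. unfold Rdiv. apply Rmult_le_pos; [lra|left; apply Rinv_0_lt_compat; auto].
Qed.
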